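(* Let $i'$ be an index and $\mathcal B$ a set of $k-m\ge1$ indices not containing $i'$, with $\sigma_h>0$ for all $h\in\{i'\}\cup\mathcal B$ and $\mu_{i'}\ne\mu_j$ for all $j\in\mathcal B$. Then there is exactly one vector $(r_h)_{h\in\{i'\}\cup\mathcal B}$ with all $r_h>0$ and $\sum_h r_h=1$ satisfying $$\frac{(\mu_{i'}-\mu_j)^2}{\sigma_{i'}^2/r_{i'}+\sigma_j^2/r_j}=\frac{(\mu_{i'}-\mu_\ell)^2}{\sigma_{i'}^2/r_{i'}+\sigma_\ell^2/r_\ell}\ \ \forall j,\ell\in\mathcal B,\qquad r_{i'}=\sigma_{i'}\sqrt{\sum_{j\in\mathcal B}r_j^2/\sigma_j^2}.$$
   Context: The $\mu_h\in\mathbb R$ are (true) means and $\sigma_h^2$ (known) variances of normal sampling distributions; $r_h$ are sampling ratios. *)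

(* Defs.v *)
From mathcomp Require Import all_boot all_order all_algebra.
From mathcomp Require Import reals.
Set Implicit Arguments. Unset Strict Implicit. Unset Printing Implicit Defensive.
Import Order.TTheory GRing.Theory Num.Theory.
Local Open Scope ring_scope.

Definition prop3_conditions (R : realType) (T : finType) (mu sigma : T -> R)
    (i' : T) (B : {set T}) (r : T -> R) : Prop :=
  [/\ (forall h, h \in i' |: B -> 0 < r h),
      \sum_(h in i' |: B) r h = 1,
      (forall j l, j \in B -> l \in B ->
         (mu i' - mu j) ^+ 2 / (sigma i' ^+ 2 / r i' + sigma j ^+ 2 / r j) =
         (mu i' - mu l) ^+ 2 / (sigma i' ^+ 2 / r i' + sigma l ^+ 2 / r l)) &
      r i' = sigma i' * Num.sqrt (\sum_(j in B) r j ^+ 2 / sigma j ^+ 2)].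

(* Main.v *)
Require Import Defs.
From mathcomp Require Import all_boot all_order all_algebra.
From mathcomp Require Import reals.
From mathcomp Require Import all_classical all_reals all_analysis.
From mathcomp Require Import ring lra.
Set Implicit Arguments. Unset Strict Implicit. Unset Printing Implicit Defensive.
Import Order.TTheory GRing.Theory Num.Theory.
Import numFieldNormedType.Exports.
Local Open Scope ring_scope.


Section Alg.
Variable R : realType.

Ltac fside := repeat (apply/andP; split); try done.

Lemma ratio_alg (x y D S t : R) : x != 0 -> y != 0 -> S != 0 -> t != 0 ->
  D - t != 0 -> D != 0 ->
  D / (x / (x / S) + y / (y * (t / (D - t)) / S)) = t / S.
Proof.
move=> *.
have -> : x / (x / S) + y / (y * (t / (D - t)) / S) = S * D / t.
  by field; fside.
by field; fside.
Qed.

Lemma sq_alg (x S u : R) : x != 0 -> S != 0 ->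
  (x ^+ 2 * u / S) ^+ 2 / x ^+ 2 = x ^+ 2 * (u * u) / S ^+ 2.
Proof. by move=> *; field; fside. Qed.

Lemma sq2_alg (l y u : R) : y != 0 ->
  (l * (y ^+ 2 * u)) ^+ 2 / y ^+ 2 = l ^+ 2 * (y ^+ 2 * (u * u)).
Proof. by move=> *; field; fside. Qed.

Lemma uniq_alg (x y a b D c : R) : 0 < x -> 0 < y -> 0 < a -> 0 < b -> 0 < D ->
  c = D / (x / a + y / b) ->
  [/\ 0 < c / (a / x), c / (a / x) < D &
      b = a / x * (y * ((c / (a / x)) / (D - c / (a / x))))].
Proof.
move=> hx hy ha hb hD ->.
have p1 : 0 < x / a by rewrite divr_gt0.
have p2 : 0 < y / b by rewrite divr_gt0.
have p12 : 0 < x / a + y / b by rewrite addr_gt0.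
have nx : x != 0 by rewrite lt0r_neq0.
have ny : y != 0 by rewrite lt0r_neq0.
have na : a != 0 by rewrite lt0r_neq0.
have nb : b != 0 by rewrite lt0r_neq0.
have nD : D != 0 by rewrite lt0r_neq0.
have n12 : x / a + y / b != 0 by rewrite lt0r_neq0.
have nxb : x * b + y * a != 0 by rewrite lt0r_neq0 // addr_gt0 // mulr_gt0.
have tE : D / (x / a + y / b) / (a / x) = D * (x / a) / (x / a + y / b).
  by field; fside.
rewrite tE.
have tpos : 0 < D * (x / a) / (x / a + y / b) by rewrite divr_gt0 // mulr_gt0.
have tlt : D * (x / a) / (x / a + y / b) < D.
  by rewrite ltr_pdivrMr // ltr_pM2l // ltrDl.
split => //.
have Dt : D - D * (x / a) / (x / a + y / b) = D * (y / b) / (x / a + y / b).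
  by field; fside.
rewrite Dt.
by field; fside.
Qed.
End Alg.

Section Root.
Variables (R : realType) (T : finType) (B : {set T}) (d s : T -> R).
Definition gf (t : R) := \sum_(j in B) s j * ((t / (d j - t)) * (t / (d j - t))).

Lemma gf_cont x : (forall j, j \in B -> x != d j) -> {for x, continuous gf}.
Proof.
move=> Hx; rewrite /gf.
have := (@cvg_big R T +%R 0 (fun j => j \in B) _ R (nbhs x) (index_enum T)
   (fun j t => s j * ((t / (d j - t)) * (t / (d j - t))))
   (fun j => s j * ((x / (d j - x)) * (x / (d j - x)))) _).
apply.
- exact: add_continuous.
- move=> j jB.
  have H : ((fun t => t / (d j - t)) @ x --> x / (d j - x))%classic.
    apply: cvgM; first exact: cvg_id.
    apply: cvgV; first by rewrite subr_eq0 eq_sym Hx.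
    apply: cvgB; [exact: cvg_cst | exact: cvg_id].
  apply: cvgM; first exact: cvg_cst.
  exact: cvgM.
Qed.

Lemma gf_ge0 t : (forall j, j \in B -> 0 < s j) -> 0 <= gf t.
Proof.
move=> hs; apply: sumr_ge0 => j jB.
by rewrite mulr_ge0 ?(ltW (hs j jB)) // -expr2 sqr_ge0.
Qed.

Lemma gf0 : gf 0 = 0.
Proof. by rewrite /gf big1 // => j _; rewrite !mul0r mulr0. Qed.

Lemma gf_root j0 a : j0 \in B -> (forall j, j \in B -> 0 < d j) ->
  (forall j, j \in B -> 0 < s j) -> 0 < a ->
  exists t, [/\ 0 < t, (forall j, j \in B -> t < d j) & gf t = a].
Proof.
move=> j0B hd hs ha.
have [j1 j1B j1min] := @arg_minP _ _ _ j0 (mem B) d j0B.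
set m := d j1.
have mpos : 0 < m by exact: hd.
set c := Num.sqrt (a / s j1).
have cpos : 0 < c by rewrite sqrtr_gt0 divr_gt0 // hs.
set t1 := m * c / (1 + c).
have c1 : 0 < 1 + c by rewrite addr_gt0.
have t1pos : 0 < t1 by rewrite divr_gt0 // mulr_gt0.
have t1m : t1 < m.
  by rewrite /t1 ltr_pdivrMr // mulrDr mulr1 ltrDr.
have t1d : forall j, j \in B -> t1 < d j.
  by move=> j jB; apply: (lt_le_trans t1m); apply: j1min.
have key : t1 / (m - t1) = c.
  have -> : m - t1 = m / (1 + c).
    rewrite /t1; field; by rewrite lt0r_neq0.
  rewrite /t1; field; apply/andP; split; by rewrite lt0r_neq0.
have ge : a <= gf t1.
  rewrite /gf (bigD1 j1) //= -/m key.
  have -> : s j1 * (c * c) = a.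
    rewrite -expr2 sqr_sqrtr ?divr_ge0 ?(ltW ha) ?(ltW (hs _ j1B)) //.
    by field; rewrite lt0r_neq0 // hs.
  rewrite lerDl; apply: sumr_ge0 => j /andP[jB _].
  by rewrite mulr_ge0 ?(ltW (hs j jB)) // -expr2 sqr_ge0.
have cont : {within `[0, t1], continuous gf}%classic.
  apply: continuous_subspace_itv => x; rewrite in_itv /= => /andP[_ xt1].
  apply: gf_cont => j jB; apply/negP => /eqP xd.
  by move: (t1d j jB); rewrite -xd ltNge xt1.
have [t tI gt] : exists2 t, t \in `[0, t1] & gf t = a.
  apply: IVT => //; first exact: ltW.
  rewrite gf0; apply/andP; split.
    by rewrite ge_min; apply/orP; left; exact: ltW.
  by rewrite le_max ge orbT.
move: tI; rewrite in_itv /= => /andP[t0 tt1].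
exists t; split => //.
- rewrite lt_neqAle t0 andbT; apply/negP => /eqP t0E.
  by move: gt; rewrite -t0E gf0 => a0; move: ha; rewrite -a0 ltxx.
- by move=> j jB; apply: (le_lt_trans tt1); exact: t1d.
Qed.

Lemma gf_mono t1 t2 : (exists j, j \in B) -> (forall j, j \in B -> 0 < s j) ->
  0 <= t1 -> t1 < t2 -> (forall j, j \in B -> t2 < d j) -> gf t1 < gf t2.
Proof.
move=> [j0 j0B] hs t10 t12 hd.
rewrite /gf; apply: ltr_sum.
  by apply/hasP; exists j0 => //; rewrite mem_index_enum.
move=> j jB.
have dt1 : 0 < d j - t1 by rewrite subr_gt0 (lt_trans t12) // hd.
have dt2 : 0 < d j - t2 by rewrite subr_gt0 hd.
have q : t1 / (d j - t1) < t2 / (d j - t2).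
  rewrite ltr_pdivrMr // mulrAC ltr_pdivlMr //.
  have dpos : 0 < d j * (t2 - t1).
    by rewrite mulr_gt0 ?subr_gt0 // (le_lt_trans t10) // (lt_trans t12) ?hd.
  nra.
rewrite ltr_pM2l ?hs //.
have q0 : 0 <= t1 / (d j - t1) by rewrite divr_ge0 // ltW.
by rewrite ltr_pM // ?(le_lt_trans q0).
Qed.

End Root.

Theorem proposition3 (R : realType) (T : finType) (mu sigma : T -> R)
    (i' : T) (B : {set T}) :
  i' \notin B -> (0 < #|B|)%N ->
  (forall h, h \in i' |: B -> 0 < sigma h) ->
  (forall j, j \in B -> mu i' != mu j) ->
  exists r : T -> R,
    prop3_conditions mu sigma i' B r /\
    forall r' : T -> R, prop3_conditions mu sigma i' B r' ->
      forall h, h \in i' |: B -> r' h = r h.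
Proof.
move=> iB /card_gt0P [j0 j0B] hsig hmu.
pose s := fun j => sigma j ^+ 2.
pose d := fun j => (mu i' - mu j) ^+ 2.
have hs : forall j, j \in B -> 0 < s j.
  by move=> j jB; rewrite /s exprn_gt0 // hsig // setU1r.
have hd : forall j, j \in B -> 0 < d j.
  move=> j jB; rewrite /d lt_neqAle sqr_ge0 andbT eq_sym sqrf_eq0 subr_eq0.
  exact: hmu.
have si0 : 0 < sigma i' by rewrite hsig // setU11.
have [t [tpos tlt gt]] := @gf_root R T B d s j0 (sigma i' ^+ 2) j0B hd hs
   (exprn_gt0 2 si0).
pose r0 := fun h => if h == i' then sigma i' ^+ 2 else s h * (t / (d h - t)).
pose S := \sum_(h in i' |: B) r0 h.
have r0i : r0 i' = sigma i' ^+ 2 by rewrite /r0 eqxx.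
have r0j : forall j, j \in B -> r0 j = s j * (t / (d j - t)).
  move=> j jB; rewrite /r0; case: eqP => // E.
  by move: iB; rewrite -E jB.
have qpos : forall j, j \in B -> 0 < s j * (t / (d j - t)).
  by move=> j jB; rewrite mulr_gt0 ?hs // divr_gt0 // subr_gt0 tlt.
have r0pos : forall h, h \in i' |: B -> 0 < r0 h.
  move=> h; rewrite in_setU1 => /orP[/eqP -> | hB].
    by rewrite r0i exprn_gt0.
  by rewrite r0j // qpos.
have Spos : 0 < S.
  rewrite /S big_setU1 //= r0i.
  apply: (lt_le_trans (exprn_gt0 2 si0)); rewrite lerDl.
  by apply: sumr_ge0 => j jB; rewrite ltW // r0pos // setU1r.
have Sn0 : S != 0 by rewrite lt0r_neq0.
pose r := fun h => r0 h / S.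
have ratio : forall j, j \in B ->
   (mu i' - mu j) ^+ 2 / (sigma i' ^+ 2 / r i' + sigma j ^+ 2 / r j) = t / S.
  move=> j jB; rewrite /r r0i r0j //.
  have dt : d j - t != 0 by rewrite lt0r_neq0 // subr_gt0 tlt.
  have n1 : sigma i' ^+ 2 != 0 by rewrite lt0r_neq0 // exprn_gt0.
  have n2 : sigma j ^+ 2 != 0 by rewrite lt0r_neq0 // (hs j jB).
  have n3 : (mu i' - mu j) ^+ 2 != 0 by rewrite lt0r_neq0 // (hd j jB).
  have n4 : t != 0 by rewrite lt0r_neq0.
  exact: ratio_alg.
exists r; split.
  split.
  - by move=> h hh; rewrite divr_gt0 // r0pos.
  - by rewrite -mulr_suml mulfV.
  - by move=> j l jB lB; rewrite ratio // ratio.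
  - have sumE : \sum_(j in B) r j ^+ 2 / sigma j ^+ 2 = gf B d s t / S ^+ 2.
      rewrite /gf mulr_suml; apply: eq_bigr => j jB.
      rewrite /r r0j // /s sq_alg //.
      by rewrite lt0r_neq0 // hsig // setU1r.
    rewrite sumE gt -expr_div_n sqrtr_sqr ger0_norm ?divr_ge0 ?ltW //.
    by rewrite /r r0i mulrA -expr2.
move=> r' [H1 H2 H3 H4] h hh.
pose x := sigma i' ^+ 2.
have xpos : 0 < x by rewrite exprn_gt0.
have ai : 0 < r' i' by rewrite H1 // setU11.
have hb : forall j, j \in B -> 0 < r' j by move=> j jB; rewrite H1 // setU1r.
pose c := d j0 / (x / r' i' + s j0 / r' j0).
have hc : forall j, j \in B -> c = d j / (x / r' i' + s j / r' j).
  by move=> j jB; symmetry; exact: H3.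
pose lam := r' i' / x.
have lampos : 0 < lam by rewrite divr_gt0.
have U : forall j, j \in B -> [/\ 0 < c / lam, c / lam < d j &
      r' j = lam * (s j * ((c / lam) / (d j - c / lam)))].
  by move=> j jB; exact: (uniq_alg xpos (hs j jB) ai (hb j jB) (hd j jB) (hc j jB)).
have [t'pos _ _] := U j0 j0B.
have g' : gf B d s (c / lam) = x.
  have sumE : \sum_(j in B) r' j ^+ 2 / sigma j ^+ 2 = lam ^+ 2 * gf B d s (c / lam).
    rewrite /gf mulr_sumr; apply: eq_bigr => j jB.
    have [_ _ ->] := U j jB.
    by rewrite /s sq2_alg // lt0r_neq0 // hsig // setU1r.
  move: H4; rewrite sumE sqrtrM ?sqr_ge0 // sqrtr_sqr ger0_norm ?ltW // => H4.
  have E : (lam * sigma i') * sigma i' = (lam * sigma i') * Num.sqrt (gf B d s (c / lam)).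
    have -> : lam * sigma i' * sigma i' = r' i'.
      by rewrite -mulrA -expr2 /lam -/x divfK // lt0r_neq0.
    by rewrite H4; ring.
  have := mulfI _ E; rewrite mulf_neq0 ?lt0r_neq0 // => /(_ isT) E2.
  by rewrite /x E2 sqr_sqrtr // gf_ge0.
have tt : c / lam = t.
  case: (ltgtP (c / lam) t) => // [lt|lt].
    have := @gf_mono R T B d s (c / lam) t (ex_intro _ j0 j0B) hs (ltW t'pos) lt tlt.
    by rewrite g' gt ltxx.
  have := @gf_mono R T B d s t (c / lam) (ex_intro _ j0 j0B) hs (ltW tpos) lt.
  move=> H; have : gf B d s t < gf B d s (c / lam).
    by apply: H => j jB; have [] := U j jB.
  by rewrite g' gt ltxx.
have rlam : forall h, h \in i' |: B -> r' h = lam * r0 h.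
  move=> h1; rewrite in_setU1 => /orP[/eqP -> | hB].
    by rewrite r0i /lam divfK // lt0r_neq0.
  by have [_ _ ->] := U h1 hB; rewrite tt r0j.
have lS : lam * S = 1.
  by rewrite -H2 /S mulr_sumr; apply: eq_bigr => h1 h1B; rewrite rlam.
have lamE : lam = S^-1 by rewrite -(mulfK Sn0 lam) lS div1r.
by rewrite rlam // lamE mulrC.
Qed.
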